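(* Let $\mathbf{v}\in\mathbb{R}^n$ with $\|\mathbf{v}\|_1:=\sum_{k=1}^n|v_k|<1$ and let $s:=\sum_{k=1}^n v_k$. Then \[ 0\le\prod_{k=1}^n\frac{1}{1+v_k}-(1-s)\le\frac{\|\mathbf{v}\|_1^2}{1-\|\mathbf{v}\|_1} \] and \[ -\frac{\|\mathbf{v}\|_1^2}{(1-\|\mathbf{v}\|_1)^3}\Bigl(1+\tfrac14\|\mathbf{v}\|_1^2\Bigr)\le\prod_{k=1}^n(1+v_k)-(1+s)\le\frac{s^2}{1-s}. \] *)

(* Defs.v *)
From mathcomp Require Import all_boot all_order all_algebra.
From mathcomp Require Import reals.
Set Implicit Arguments. Unset Strict Implicit. Unset Printing Implicit Defensive.
Import Order.TTheory GRing.Theory Num.Theory.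
Local Open Scope ring_scope.

Definition norm1 (R : realType) (n : nat) (v : 'I_n -> R) : R :=
  \sum_(k < n) `|v k|.

(* Main.v *)
Require Import Defs.
From mathcomp Require Import all_boot all_order all_algebra.
From mathcomp Require Import reals.
From mathcomp Require Import sequences exp ring lra.
Import Order.TTheory GRing.Theory Num.Theory.
Local Open Scope ring_scope.

Section Aux.
Variables (R : realType) (I : Type) (v : I -> R).

Lemma absA x : -`|x| <= x :> R.
Proof. by have := lexx `|x|; rewrite ler_norml => /andP[]. Qed.
Lemma absB x : x <= `|x| :> R.
Proof. by have := lexx `|x|; rewrite ler_norml => /andP[]. Qed.

Lemma sumA_ge0 r : 0 <= \sum_(i <- r) `|v i|.
Proof. by apply: sumr_ge0 => i _. Qed.

Lemma weier r : \sum_(i <- r) `|v i| < 1 ->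
  1 - \sum_(i <- r) `|v i| <= \prod_(i <- r) (1 - `|v i|).
Proof.
elim: r => [|x r IH]; first by rewrite !big_nil subr0.
rewrite !big_cons => h.
have h0 := sumA_ge0 r; have ha : 0 <= `|v x| by [].
have /IH {}IH : \sum_(i <- r) `|v i| < 1 by lra.
have h1 : 0 <= 1 - `|v x| by lra.
have := mulr_ge0 ha h0.
have := ler_wpM2l h1 IH. nra.
Qed.

Lemma majP r :
  `|\prod_(i <- r) (1 + v i) - (1 + \sum_(i <- r) v i)|
   <= \prod_(i <- r) (1 + `|v i|) - 1 - \sum_(i <- r) `|v i|.
Proof.
elim: r => [|x r IH]; first by rewrite !big_nil addr0 subrr normr0 subrr.
rewrite !big_cons.
set P := \prod_(i <- r) _ in IH *; set s := \sum_(i <- r) v i in IH *.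
set G := \prod_(i <- r) _ in IH *; set A := \sum_(i <- r) _ in IH *.
have -> : (1 + v x) * P - (1 + (v x + s)) = s * v x + (1 + v x) * (P - (1 + s)) by ring.
apply: le_trans (ler_normD _ _) _; rewrite !normrM.
have hs : `|s| <= A by apply: ler_norm_sum.
have h1 : `|1 + v x| <= 1 + `|v x| by apply: (le_trans (ler_normD _ _)); rewrite normr1.
have ha : 0 <= `|v x| by [].
have hs0 : 0 <= `|s| by [].
have hp0 : 0 <= `|P - (1 + s)| by [].
have := ler_pM hs0 ha hs (lexx _).
have := ler_pM (normr_ge0 _) hp0 h1 IH.
lra.
Qed.


Lemma majQ r : \sum_(i <- r) `|v i| < 1 ->
  `|\prod_(i <- r) (1 + v i)^-1 - (1 - \sum_(i <- r) v i)|
   <= (\prod_(i <- r) (1 - `|v i|))^-1 - 1 - \sum_(i <- r) `|v i|.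
Proof.
elim: r => [|x r IH]; first by rewrite !big_nil subr0 invr1 subrr normr0 subrr.
rewrite !big_cons => h.
have h0 := sumA_ge0 r; have ha : 0 <= `|v x| by [].
have hr : \sum_(i <- r) `|v i| < 1 by lra.
have hW := weier r hr.
move/(_ hr): IH.
set Q := \prod_(i <- r) _; set s := \sum_(i <- r) v i.
set W := \prod_(i <- r) _ in hW *; set A := \sum_(i <- r) _ in hW h hr h0 *.
set a := `|v x| in h ha *.
have hxa := absA (v x); have hxb := absB (v x); rewrite -/a in hxa hxb.
set y := v x in hxa hxb *.
have hy : 0 < 1 + y by lra.
have hW0 : 0 < W by lra.
have ha1 : 0 < 1 - a by lra.
set u := (1 + y)^-1; set m := (1 - a)^-1.
have hu : u * (1 + y) = 1 by rewrite mulVf // gt_eqF.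
have hm : m * (1 - a) = 1 by rewrite mulVf // gt_eqF.
have hu0 : 0 < u by rewrite invr_gt0.
have hum : u <= m by rewrite lef_pV2 ?posrE //; lra.
rewrite invfM -/m.
set M := W^-1 => IH.
have -> : u * Q - (1 - (y + s)) = s * y + (1 - s) * (y * y * u) + (Q - (1 - s)) * u
   + (1 - s) * (1 - u * (1 + y)) * (y - 1) by ring.
rewrite hu subrr mulr0 mul0r addr0.
apply: le_trans (ler_normD _ _) _.
apply: le_trans (lerD (ler_normD _ _) (lexx _)) _.
rewrite !normrM (gtr0_norm hu0) -/a.
have hs : `|s| <= A by apply: ler_norm_sum.
have h1s : `|1 - s| <= 1 + A.
  apply: (le_trans (ler_normD _ _)); rewrite normr1 normrN; lra.
have e1 := ler_pM (normr_ge0 _) ha hs (lexx a).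
have e2 := ler_pM (normr_ge0 _) (mulr_ge0 (mulr_ge0 ha ha) (ltW hu0)) h1s
   (ler_pM (mulr_ge0 ha ha) (ltW hu0) (lexx (a * a)) hum).
have e3 := ler_pM (normr_ge0 _) (ltW hu0) IH hum.
have e4 : (1 + A) * (1 + a) * (m * (1 - a)) = (1 + A) * (1 + a) by rewrite hm mulr1.
have e5 : M * m = m * M by rewrite mulrC.
nra.
Qed.

Lemma PQ r : \sum_(i <- r) `|v i| < 1 ->
  \prod_(i <- r) (1 + `|v i|) <= (\prod_(i <- r) (1 - `|v i|))^-1.
Proof.
elim: r => [|x r IH]; first by rewrite !big_nil invr1.
rewrite !big_cons => h.
have h0 := sumA_ge0 r; have ha : 0 <= `|v x| by [].
have hr : \sum_(i <- r) `|v i| < 1 by lra.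
have hW := weier r hr; move/(_ hr): IH.
set G := \prod_(i <- r) _; set W := \prod_(i <- r) _ in hW *.
set A := \sum_(i <- r) _ in hW h hr h0 *; set a := `|v x| in h ha *.
move=> IH.
have hG : 0 <= G by apply: prodr_ge0 => i _; apply: addr_ge0.
have ha1 : 0 < 1 - a by lra.
rewrite invfM; apply: ler_pM => //; first lra.
rewrite -[(1 - a)^-1]mul1r ler_pdivlMr //.
have := mulr_ge0 ha ha; nra.
Qed.

Lemma Pexp r : \sum_(i <- r) `|v i| < 1 ->
  0 < \prod_(i <- r) (1 + v i) <= expR (\sum_(i <- r) v i).
Proof.
elim: r => [|x r IH]; first by rewrite !big_nil expR0 ltr01 lexx.
rewrite !big_cons => h.
have h0 := sumA_ge0 r; have ha : 0 <= `|v x| by [].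
have hr : \sum_(i <- r) `|v i| < 1 by lra.
move/(_ hr): IH => /andP[IH1 IH2].
have hxa := absA (v x).
have hy : 0 < 1 + v x by lra.
rewrite mulr_gt0 //= expRD; apply: ler_pM => //; first exact: ltW.
  exact: ltW.
exact: expR_ge1Dx.
Qed.

End Aux.

Theorem lemma7 (R : realType) (n : nat) (v : 'I_n -> R)
  (hv : norm1 v < 1) :
  let s := \sum_(k < n) v k in
  let N := norm1 v in
  (0 <= \prod_(k < n) (1 + v k)^-1 - (1 - s) /\
   \prod_(k < n) (1 + v k)^-1 - (1 - s) <= N ^+ 2 / (1 - N)) /\
  (- (N ^+ 2 / (1 - N) ^+ 3 * (1 + N ^+ 2 / 4))
     <= \prod_(k < n) (1 + v k) - (1 + s) /\
   \prod_(k < n) (1 + v k) - (1 + s) <= s ^+ 2 / (1 - s)).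
Proof.
move=> s N.
have hN : \sum_(i <- index_enum 'I_n) `|v i| < 1 := hv.
have hW := @weier R _ v _ hN.
have hP := @Pexp R _ v _ hN.
have hmP := @majP R _ v (index_enum 'I_n).
have hG := @PQ R _ v _ hN.
have hQ := @majQ R _ v _ hN.
rewrite prodfV; rewrite prodfV in hQ.
have eN : \sum_(i < n) `|v i| = N by [].
rewrite -/s in hP hmP hQ; rewrite eN in hN hW hmP hG hQ.
set P := \prod_(i <- _) (1 + v i) in hP hmP hQ *.
set W := \prod_(i <- _) (1 - `|v i|) in hW hG hQ.
set G := \prod_(i <- _) (1 + `|v i|) in hmP hG.
have hN0 : 0 <= N by apply: sumr_ge0.
have hs : `|s| <= N by apply: ler_norm_sum.
have hsa := @absA R s; have hsb := @absB R s.
have hN1 : 0 < 1 - N by lra.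
have hs1 : 0 < 1 - s by lra.
have hW0 : 0 < W by lra.
case/andP: hP => hP0 hPe.
set e := expR s in hPe.
have he0 : 0 < e by apply: expR_gt0.
have hie : 1 - s <= e^-1 by rewrite /e -expRN; have := expR_ge1Dx (- s); lra.
have hPi : e^-1 <= P^-1 by rewrite lef_pV2 ?posrE.
have hes : e <= (1 - s)^-1.
  by rewrite -[e]invrK lef_pV2 ?posrE ?invr_gt0.
have hWd : W^-1 <= (1 - N)^-1 by rewrite lef_pV2 ?posrE.
have eqN : N ^+ 2 / (1 - N) = (1 - N)^-1 - 1 - N by field; rewrite gt_eqF.
have eqs : s ^+ 2 / (1 - s) = (1 - s)^-1 - 1 - s by field; rewrite gt_eqF.
have hQa := @absB R (P^-1 - (1 - s)).
have hPa := @absA R (P - (1 + s)).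
split; [split|split].
- lra.
- rewrite eqN; lra.
- set d := (1 - N)^-1 in hWd eqN.
  have hd : d * (1 - N) = 1 by rewrite mulVf // gt_eqF.
  have hd1 : 1 <= d by nra.
  have -> : N ^+ 2 / (1 - N) ^+ 3 * (1 + N ^+ 2 / 4) =
     (N ^+ 2 / (1 - N)) * (d ^+ 2 * (1 + N ^+ 2 / 4)).
    by rewrite /d; field; rewrite gt_eqF.
  have hX : 0 <= N ^+ 2 / (1 - N) by apply: divr_ge0 => //; [exact: sqr_ge0 | exact: ltW].
  have hY : 1 <= d ^+ 2 * (1 + N ^+ 2 / 4).
    have : 0 <= N ^+ 2 / 4 by apply: divr_ge0 => //; exact: sqr_ge0.
    have : 1 <= d ^+ 2 by rewrite expr2; nra.
    nra.
  have := ler_peMr hX hY.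
  rewrite eqN; lra.
- rewrite eqs; lra.
Qed.
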